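(* Let $\bar F:\mathbb{R}^n\times\mathbb{R}^q\times\mathbb{R}_{>0}\to\mathbb{R}^n$ and consider $x_{k+1}=\bar F(x_k,e_k,T_k)$. Suppose that: (i) there exists $\mathring T>0$ such that $\bar F(0,0,T)=0$ for all $T\in(0,\mathring T)$; (ii) there exists $\hat T>0$ such that for every $\epsilon>0$ there exists $\delta=\delta(\epsilon)>0$ such that $|\bar F(x,e,T)|<\epsilon$ whenever $|x|\le\delta$, $|e|\le\delta$ and $T\in(0,\hat T)$; (iii) for every $M,E\ge0$ there exist $C=C(M,E)>0$ and $\check T=\check T(M,E)>0$, with $C(\cdot,\cdot)$ nondecreasing in each variable and $\check T(\cdot,\cdot)$ nonincreasing in each variable, such that $|\bar F(x,e,T)|\le C$ for all $|x|<M$, $|e|<E$ and $T\in(0,\check T)$; (iv) there exist $N>0$, constants $K_1,K_2,K_3\ge1$, the functions $\alpha_i(s):=K_is^N$ ($i=1,2,3$), and $\rho\in\mathcal{K}$ such that for every $M,E\ge0$ there exist $\tilde T=\tilde T(M,E)>0$ and $V=V_{M,E}:\mathbb{R}^n\to\mathbb{R}_{\ge0}\cup\{\infty\}$ with $\alpha_1(|x|)\le V(x)$ for all $x\in\mathbb{R}^n$, $V(x)\le\alpha_2(|x|)$ for all $|x|\le M$, and $V(\bar F(x,e,T))-V(x)\le -T\alpha_3(|x|)$ for all $x,e$ with $\rho(|e|)\le|x|\le M$, $|e|\le E$ and all $T\in(0,\tilde T)$. Then the system $x_{k+1}=\bar F(x_k,e_k,T_k)$ is SE-ISS-VSR.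
   Context: For $T>0$, $\Phi(T)$ denotes the set of all sequences $\{T_i\}_{i=0}^\infty$ with $T_i\in(0,T)$ for all $i$; $\|\{e_i\}\|:=\sup_{i\ge0}|e_i|$. Conventions: $\sum_{i=0}^{-1}T_i=0$ and $\gamma(\sup_{0\le i\le -1}|e_i|)=0$. $\mathcal{K}$: continuous strictly increasing functions $\mathbb{R}_{\ge0}\to\mathbb{R}_{\ge0}$ vanishing at $0$; $\mathcal{K}_\infty$: unbounded members of $\mathcal{K}$. SE-ISS-VSR: there exist $K\ge1$, $\lambda>0$, $\gamma\in\mathcal{K}_\infty$ such that for all $M,E\ge0$ there exists $T^\star=T^\star(M,E)>0$ such that for all $k\in\mathbb{N}_0$, $\{T_i\}\in\Phi(T^\star)$, $|x_0|\le M$ and $\|\{e_i\}\|\le E$, solutions satisfy $|x_k|\le K|x_0|\exp(-\lambda\sum_{i=0}^{k-1}T_i)+\gamma(\sup_{0\le i\le k-1}|e_i|)$. *)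

(* Defs.v *)
From HB Require Import structures.
From mathcomp Require Import all_boot all_order all_algebra.
From mathcomp Require Import all_classical all_reals all_analysis.
Set Implicit Arguments. Unset Strict Implicit. Unset Printing Implicit Defensive.
Import Order.TTheory GRing.Theory Num.Theory.
Import numFieldNormedType.Exports.
Local Open Scope ring_scope.
Local Open Scope classical_set_scope.

Definition vnorm (R : realType) (n : nat) (x : 'cV[R]_n) : R :=
  Num.sqrt (\sum_(i < n) (x i ord0) ^+ 2).

Definition class_K (R : realType) (f : R -> R) : Prop :=
  [/\ {within [set x : R | 0 <= x], continuous f},
      (forall x y : R, 0 <= x -> x < y -> f x < f y),
      (forall x : R, 0 <= x -> 0 <= f x) & f 0 = 0].

Definition class_Kinf (R : realType) (f : R -> R) : Prop :=
  class_K f /\ (forall M : R, exists s : R, 0 <= s /\ M < f s).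

Fixpoint traj (R : realType) (n q : nat)
  (F : 'cV[R]_n -> 'cV[R]_q -> R -> 'cV[R]_n)
  (x0 : 'cV[R]_n) (e : nat -> 'cV[R]_q) (Ts : nat -> R) (k : nat) : 'cV[R]_n :=
  match k with
  | 0 => x0
  | k'.+1 => F (traj F x0 e Ts k') (e k') (Ts k')
  end.

Definition in_Phi (R : realType) (T : R) (Ts : nat -> R) : Prop :=
  forall i, 0 < Ts i < T.

(* SE-ISS-VSR; sup over the empty index set is 0, and gamma 0 = 0 *)
Definition SE_ISS_VSR (R : realType) (n q : nat)
  (F : 'cV[R]_n -> 'cV[R]_q -> R -> 'cV[R]_n) : Prop :=
  exists (K lam : R) (gamma : R -> R),
    1 <= K /\ 0 < lam /\ class_Kinf gamma /\
    forall M E : R, 0 <= M -> 0 <= E ->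
      exists Tstar : R, 0 < Tstar /\
        forall (k : nat) (Ts : nat -> R) (x0 : 'cV[R]_n) (e : nat -> 'cV[R]_q),
          in_Phi Tstar Ts -> vnorm x0 <= M -> (forall i, vnorm (e i) <= E) ->
          vnorm (traj F x0 e Ts k) <=
            K * vnorm x0 * expR (- lam * \sum_(i < k) Ts i)
            + gamma (\big[Num.max/0]_(i < k) vnorm (e i)).

(* Main.v *)
Require Import Defs.
From HB Require Import structures.
From mathcomp Require Import all_boot all_order all_algebra.
From mathcomp Require Import all_classical all_reals all_analysis.
From mathcomp Require Import lra ring.
Import Order.TTheory GRing.Theory Num.Theory.
Import numFieldNormedType.Exports.
Local Open Scope ring_scope.
Local Open Scope classical_set_scope.
Lemma majorant (R : realType) (P : R -> R -> Prop) :
  (forall r y, P r y -> 0 < r /\ 0 <= y) ->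
  (forall s, exists B, forall r y, r <= s -> P r y -> y <= B) ->
  (forall eps, 0 < eps -> exists d, 0 < d /\ forall r y, r <= d -> P r y -> y <= eps) ->
  exists g : R -> R, [/\ continuous g, (forall x y, 0 <= x -> x < y -> g x < g y),
     g 0 = 0, (forall s, 0 <= s -> s <= g s) &
     (forall r y s, P r y -> r <= s -> y <= g s)].
Proof.
move=> HP Hb Hz.
pose W := fun s => [set z | exists r y, [/\ P r y, r <= 2 * s & z = y * (2 - r / s)]].
pose h := fun s => sup (W s).
have hW0 : forall s : R, s <= 0 -> W s = set0.
  move=> s s0; apply/seteqP; split => z //= [r [y [Pry rs _]]].
  have := (HP _ _ Pry).1; lra.
have hfac : forall r s : R, 0 < r -> r <= 2 * s -> 0 < s /\ 0 <= r / s <= 2.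
  move=> r s r0 rs; have s0 : 0 < s by lra.
  split => //; apply/andP; split; first by rewrite divr_ge0 // ltW.
  by rewrite ler_pdivrMr // mulrC.
have hge : forall s z : R, W s z -> 0 <= z.
  move=> s z [r [y [Pry rs ->]]]; have [r0 y0] := HP _ _ Pry.
  have [s0 /andP [u0 u2]] := hfac r s r0 rs.
  apply: mulr_ge0 => //; lra.
have hub : forall s : R, has_ubound (W s).
  move=> s; have [B HB] := Hb (2 * s); exists (2 * Num.max B 0).
  move=> z [r [y [Pry rs ->]]]; have [r0 y0] := HP _ _ Pry.
  have [s0 /andP [u0 u2]] := hfac r s r0 rs.
  have yB := HB _ _ rs Pry.
  have : y <= Num.max B 0 by rewrite le_max yB.
  move: (r / s) u0 u2 => u u0 u2 yB'. nra.
have hup : forall s z : R, W s z -> z <= h s by move=> s z Wz; exact: ub_le_sup (hub s) z Wz.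
have hle : forall s b : R, (forall z, W s z -> z <= b) -> 0 <= b -> h s <= b.
  move=> s b Hzb b0; case: (pselect (exists z, W s z)) => [ne|nex].
    exact: ge_sup.
  rewrite /h (_ : W s = set0) ?sup0 //.
  apply/seteqP; split => z //= Wz; exfalso; apply: nex; by exists z.
have hh0 : forall s : R, 0 <= h s.
  move=> s; case: (pselect (exists z, W s z)) => [[z Wz]|nex].
    exact: le_trans (hge _ _ Wz) (hup _ _ Wz).
  rewrite /h (_ : W s = set0) ?sup0 //.
  apply/seteqP; split => z //= Wz; exfalso; apply: nex; by exists z.
have hneg : forall s : R, s <= 0 -> h s = 0 by move=> s s0; rewrite /h hW0 // sup0.
have hmono : forall s s' : R, s <= s' -> h s <= h s'.
  move=> s s' ss'; apply: hle (hh0 s') => z [r [y [Pry rs ->]]].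
  have [r0 y0] := HP _ _ Pry.
  have [s0 _] := hfac r s r0 rs.
  have s'0 : 0 < s' by lra.
  apply: le_trans (hup s' (y * (2 - r / s')) _); last first.
    exists r, y; split => //; lra.
  apply: ler_wpM2l => //.
  have : r / s' <= r / s.
    apply: ler_wpM2l; first exact: ltW.
    by rewrite lef_pV2 // posrE.
  lra.
have hbound : forall r y s : R, P r y -> r <= s -> y <= h s + s.
  move=> r y s Pry rs; have [r0 y0] := HP _ _ Pry.
  have rs2 : r <= 2 * s by lra.
  have [s0 _] := hfac r s r0 rs2.
  have : y * (2 - r / s) <= h s by apply: hup; exists r, y; split.
  have : r / s <= 1 by rewrite ler_pdivrMr // mul1r.
  move: (r / s) => u u1 hu.
  have : y <= y * (2 - u) by rewrite -{1}(mulr1 y); apply: ler_wpM2l => //; lra.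
  lra.
have hzero : forall eps : R, 0 < eps -> exists d : R, 0 < d /\ forall s : R, s <= d -> h s <= eps.
  move=> eps e0; have [d [d0 Hd]] := Hz (eps / 2) ltac:(lra).
  exists (d / 2); split; first lra.
  move=> s sd; apply: hle; last lra.
  move=> z [r [y [Pry rs ->]]]; have [r0 y0] := HP _ _ Pry.
  have [s0 /andP [u0 u2]] := hfac r s r0 rs.
  have := Hd r y ltac:(lra) Pry.
  move: (r / s) u0 u2 => u u0 u2 yB. nra.
have hlip : forall a : R, 0 < a -> exists L : R, 0 <= L /\ forall s s' : R,
    a / 2 <= s <= 2 * a -> a / 2 <= s' <= 2 * a -> h s <= h s' + L * `|s - s'|.
  move=> a a0; have [B HB] := Hb (4 * a).
  pose B' := Num.max B 0.
  have B'0 : 0 <= B' by rewrite le_max lexx orbT.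
  exists (16 * B' / a); split; first by rewrite divr_ge0 ?mulr_ge0 // ltW.
  move=> s s' /andP [s1 s2] /andP [s'1 s'2].
  have s0 : 0 < s by lra.
  have s'0 : 0 < s' by lra.
  have L0 : 0 <= 16 * B' / a by rewrite divr_ge0 // ?mulr_ge0 // ltW.
  apply: hle; last by apply: addr_ge0 => //; apply: mulr_ge0.
  move=> z [r [y [Pry rs ->]]]; have [r0 y0] := HP _ _ Pry.
  have yB : y <= B' by rewrite le_max (HB r y ltac:(lra) Pry).
  have iu : s^-1 <= 2 / a.
    rewrite -[2 / a]invf_div lef_pV2 ?posrE //; last by rewrite divr_gt0.
  have iu' : s'^-1 <= 2 / a.
    rewrite -[2 / a]invf_div lef_pV2 ?posrE //; last by rewrite divr_gt0.
  have su : s * s^-1 = 1 by rewrite divff // gt_eqF.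
  have su' : s' * s'^-1 = 1 by rewrite divff // gt_eqF.
  have ia : a * a^-1 = 1 by rewrite divff // gt_eqF.
  have u0 : 0 <= s^-1 by rewrite invr_ge0 ltW.
  have u'0 : 0 <= s'^-1 by rewrite invr_ge0 ltW.
  have nrm : s - s' <= `|s - s'| by exact: ler_norm.
  have n0 : 0 <= `|s - s'| by [].
  case: (lerP r (2 * s')) => rs'.
    have Wz : W s' (y * (2 - r / s')) by exists r, y; split.
    have := hup _ _ Wz.
    have key : y * (2 - r / s) - y * (2 - r / s') = (y * r * (s^-1 * s'^-1)) * (s - s').
      by field; apply/andP; split; rewrite gt_eqF.
    have p0 : 0 <= y * r * (s^-1 * s'^-1) by rewrite !mulr_ge0 // ltW.
    have b1 : (y * r * (s^-1 * s'^-1)) * (s - s') <= (y * r * (s^-1 * s'^-1)) * `|s - s'|.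
      exact: ler_wpM2l.
    have b2 : y * r * (s^-1 * s'^-1) <= B' * (4 * a) * (2 / a * (2 / a)).
      apply: ler_pM; first by rewrite mulr_ge0 // ltW.
        by rewrite mulr_ge0.
        by apply: ler_pM => //; [exact: ltW | lra].
      by apply: ler_pM.
    have b3 : B' * (4 * a) * (2 / a * (2 / a)) = 16 * B' / a.
      by field; rewrite gt_eqF.
    have b4 := ler_wpM2r n0 b2.
    rewrite b3 in b4.
    lra.
  have e1 : y * (2 - r / s) <= y * (2 * s^-1 * (s - s')).
    apply: ler_wpM2l => //.
    have : 2 * s' * s^-1 <= r * s^-1 by apply: ler_wpM2r => //; lra.
    have : 2 * s^-1 * (s - s') = 2 - 2 * s' * s^-1.
      by field; rewrite gt_eqF.
    lra.
  have e2 : y * (2 * s^-1 * (s - s')) <= (B' * (2 * (2 / a))) * `|s - s'|.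
    have ss : 0 <= s - s' by lra.
    have -> : y * (2 * s^-1 * (s - s')) = (y * (2 * s^-1)) * (s - s') by ring.
    apply: ler_pM => //.
      by rewrite !mulr_ge0.
    apply: ler_pM => //.
      by rewrite mulr_ge0.
    lra.
  have e3 : (B' * (2 * (2 / a))) * `|s - s'| <= 16 * B' / a * `|s - s'|.
    apply: ler_wpM2r => //.
    have : B' * (2 * (2 / a)) = 4 * B' / a by field; rewrite gt_eqF.
    move=> ->; apply: ler_wpM2r; first by rewrite invr_ge0 ltW.
    lra.
  have := hh0 s'.
  lra.
have hcont : continuous h.
  move=> a; apply/cvgrPdist_lt => eps e0.
  case: (ltrgtP a 0) => [a0|a0|->].
  - apply/nbhs_ballP; exists (- a); first by rewrite /= oppr_gt0.
    move=> t; rewrite /ball /= ltr_norml => /andP [h1 h2].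
    by rewrite !hneg ?subrr ?normr0 //; lra.
  - have [L [L0 HL]] := hlip a a0.
    have w0 : 0 < eps / (L + 1) by rewrite divr_gt0 //; lra.
    apply/nbhs_ballP; exists (Num.min (a / 2) (eps / (L + 1))).
      by rewrite /= lt_min w0 andbT; lra.
    move=> t; rewrite /ball /= lt_min => /andP [h1 h2].
    move: h1; rewrite ltr_norml => /andP [h3 h4].
    have t1 : a / 2 <= t <= 2 * a by apply/andP; split; lra.
    have t2 : a / 2 <= a <= 2 * a by apply/andP; split; lra.
    have b1 := HL _ _ t2 t1.
    have b2 := HL _ _ t1 t2.
    rewrite distrC in b2.
    have weq : eps / (L + 1) * (L + 1) = eps by rewrite divfK //; apply: lt0r_neq0; lra.
    have n0 : 0 <= `|a - t| by [].
    have k : L * `|a - t| < eps.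
      have : L * `|a - t| <= L * (eps / (L + 1)) by apply: ler_wpM2l => //; exact: ltW.
      move: (eps / (L + 1)) weq w0 => w weq w0. nra.
    rewrite ltr_norml; apply/andP; split; lra.
  - have [d [d0 Hd]] := hzero (eps / 2) ltac:(lra).
    apply/nbhs_ballP; exists d => //.
    move=> t; rewrite /ball /= sub0r normrN => hd.
    rewrite (hneg 0) // sub0r normrN ger0_norm //.
    have := Hd t (le_trans (ler_norm t) (ltW hd)). lra.
exists (fun s => h s + s); split.
- move=> x; apply: cvgD; [exact: hcont | exact: cvg_id].
- move=> x y x0 xy; have := hmono x y (ltW xy); lra.
- by rewrite hneg // addr0.
- move=> s s0; have := hh0 s; lra.
- exact: hbound.
Qed.
Lemma scaled_Kinf (R : realType) (g : R -> R) (c : R) : 0 < c -> continuous g ->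
  (forall x y, 0 <= x -> x < y -> g x < g y) -> g 0 = 0 ->
  (forall s, 0 <= s -> s <= g s) -> class_Kinf (fun s => c * g s).
Proof.
move=> c0 gc gi g0 gs; split; first split.
- apply: continuous_subspaceT => x; apply: cvgM; [exact: cvg_cst | exact: gc].
- by move=> x y x0 xy; rewrite ltr_pM2l // gi.
- by move=> x x0; apply: mulr_ge0; [exact: ltW | exact: le_trans x0 (gs x x0)].
- by rewrite g0 mulr0.
- move=> M; exists (`|M| / c + 1); split.
    by rewrite addr_ge0 // divr_ge0 // ltW.
  have h1 : 0 <= `|M| / c + 1 by rewrite addr_ge0 // divr_ge0 // ltW.
  have h2 := gs _ h1.
  have h3 : c * (`|M| / c + 1) <= c * g (`|M| / c + 1) by rewrite ler_pM2l.
  have h4 : c * (`|M| / c + 1) = `|M| + c by field; rewrite gt_eqF.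
  have h5 := ler_norm M.
  lra.
Qed.

Lemma K_small (R : realType) (rho : R -> R) : class_K rho ->
  forall eps : R, 0 < eps -> exists d : R, 0 < d /\ forall t, 0 <= t <= d -> rho t <= eps.
Proof.
case=> cont _ _ r0 eps e0.
have := (subspace_continuousP _ _).1 cont 0 (lexx 0).
move/cvgrPdist_le => /(_ eps e0).
move/nbhs_ballP => [d /= d0 Hd].
exists (d / 2); split; first by rewrite divr_gt0.
move=> t /andP [t0 td].
have := Hd t.
rewrite /ball /= sub0r normrN ger0_norm // => H.
have H' : `|rho 0 - rho t| <= eps := H ltac:(lra) t0.
move: H'; rewrite r0 sub0r normrN => H'.
have : rho t <= `|rho t| by exact: ler_norm.
lra.
Qed.

Local Close Scope classical_set_scope.

Theorem theorem2 (R : realType) (n q : nat)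
  (F : 'cV[R]_n -> 'cV[R]_q -> R -> 'cV[R]_n) :
  (* (i) *)
  (exists T0 : R, 0 < T0 /\ forall T : R, 0 < T < T0 -> F 0 0 T = 0) ->
  (* (ii) *)
  (exists Th : R, 0 < Th /\ forall eps : R, 0 < eps ->
     exists delta : R, 0 < delta /\
       forall (x : 'cV[R]_n) (e : 'cV[R]_q) (T : R),
         vnorm x <= delta -> vnorm e <= delta -> 0 < T < Th ->
         vnorm (F x e T) < eps) ->
  (* (iii) *)
  (exists C Tc : R -> R -> R,
     (forall M E : R, 0 <= M -> 0 <= E -> 0 < C M E /\ 0 < Tc M E) /\
     (forall M M' E : R, 0 <= M -> M <= M' -> 0 <= E ->
        C M E <= C M' E /\ Tc M' E <= Tc M E) /\
     (forall M E E' : R, 0 <= M -> 0 <= E -> E <= E' ->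
        C M E <= C M E' /\ Tc M E' <= Tc M E) /\
     (forall M E : R, 0 <= M -> 0 <= E ->
        forall (x : 'cV[R]_n) (e : 'cV[R]_q) (T : R),
          vnorm x < M -> vnorm e < E -> 0 < T < Tc M E ->
          vnorm (F x e T) <= C M E)) ->
  (* (iv) *)
  (exists (N K1 K2 K3 : R) (rho : R -> R),
     0 < N /\ 1 <= K1 /\ 1 <= K2 /\ 1 <= K3 /\ class_K rho /\
     forall M E : R, 0 <= M -> 0 <= E ->
       exists (Tt : R) (V : 'cV[R]_n -> \bar R),
         0 < Tt /\
         (forall x, (0 <= V x)%E) /\
         (forall x, ((K1 * vnorm x `^ N)%:E <= V x)%E) /\
         (forall x, vnorm x <= M -> (V x <= (K2 * vnorm x `^ N)%:E)%E) /\
         (forall (x : 'cV[R]_n) (e : 'cV[R]_q) (T : R),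
            rho (vnorm e) <= vnorm x -> vnorm x <= M -> vnorm e <= E ->
            0 < T < Tt ->
            (V (F x e T) <= V x - (T * (K3 * vnorm x `^ N))%:E)%E)) ->
  SE_ISS_VSR F.
Proof.
move=> _ [Th [Th0 Hcont]] [C [Tc [HCT [HmonM [HmonE HCb]]]]].
move=> [N [K1 [K2 [K3 [rho [N0 [K11 [K21 [K31 [rhoK HV]]]]]]]]]].
have [rhoc rhoi rho0 rho00] := rhoK.
have rhomono : forall x y : R, 0 <= x -> x <= y -> rho x <= rho y.
  move=> x y x0; rewrite le_eqVlt => /predU1P [->//|xy]; exact: ltW (rhoi x y x0 xy).
have vn0 : forall m (v : 'cV[R]_m), 0 <= vnorm v by move=> m v; exact: sqrtr_ge0.
pose tau := fun r : R => Num.min Th (Tc (rho r + 1) (r + 1)).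
have tau_anti : forall r E : R, 0 <= r -> r <= E -> tau E <= tau r.
  move=> r E r0 rE; rewrite /tau le_min ge_min lexx /= ge_min; apply/orP; right.
  have r1 : 0 <= rho r + 1 by have := rho0 r r0; lra.
  apply: le_trans (HmonM (rho r + 1) (rho E + 1) (E + 1) r1 _ _).2 _.
    by have := rhomono r E r0 rE; lra.
    lra.
  by apply: (HmonE (rho r + 1) (r + 1) (E + 1) r1 _ _).2; lra.
have tau_pos : forall r : R, 0 <= r -> 0 < tau r.
  move=> r r0; rewrite /tau lt_min Th0 /=.
  by apply: (HCT _ _ _ _).2; have := rho0 r r0; lra.
pose P := fun r y : R => exists (x : 'cV[R]_n) (e : 'cV[R]_q) (T : R),
   [/\ vnorm e = r, vnorm x < rho r, 0 < T < tau r & y = vnorm (F x e T)].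
have HP1 : forall r y, P r y -> 0 < r /\ 0 <= y.
  move=> r y [x [e [T [er xr _ ->]]]]; split; last exact: vn0.
  have r0 : 0 <= r by rewrite -er; exact: vn0.
  rewrite lt_neqAle r0 andbT; apply/eqP => rz.
  move: xr; rewrite -rz rho00 => xr.
  by have := vn0 _ x; lra.
have HP2 : forall s, exists B, forall r y, r <= s -> P r y -> y <= B.
  move=> s; exists (C (rho (Num.max s 0) + 1) (Num.max s 0 + 1)).
  move=> r y rs [x [e [T [er xr /andP [T0 Tr] ->]]]].
  have r0 : 0 <= r by rewrite -er; exact: vn0.
  have rhr0 := rho0 r r0.
  have rs' : r <= Num.max s 0 by rewrite le_max rs.
  have s0 : 0 <= Num.max s 0 by rewrite le_max lexx orbT.
  have rhs := rhomono r _ r0 rs'.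
  apply: le_trans (HCb (rho r + 1) (r + 1) _ _ x e T _ _ _) _.
  - lra.
  - lra.
  - lra.
  - rewrite er; lra.
  - rewrite T0 /=; apply: lt_le_trans Tr _; rewrite /tau ge_min lexx orbT //.
  apply: le_trans (HmonM (rho r + 1) (rho (Num.max s 0) + 1) (r + 1) _ _ _).1 _.
  - lra.
  - lra.
  - lra.
  apply: (HmonE (rho (Num.max s 0) + 1) (r + 1) (Num.max s 0 + 1) _ _ _).1; lra.
have HP3 : forall eps, 0 < eps -> exists d, 0 < d /\ forall r y, r <= d -> P r y -> y <= eps.
  move=> eps e0; have [delta [dl0 Hd]] := Hcont eps e0.
  have [d1 [d10 Hd1]] := @K_small R rho rhoK delta dl0.
  exists (Num.min delta d1); split; first by rewrite lt_min dl0 d10.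
  move=> r y; rewrite le_min => /andP [rd rd1] [x [e [T [er xr /andP [T0 Tr] ->]]]].
  have r0 : 0 <= r by rewrite -er; exact: vn0.
  have := Hd1 r ltac:(apply/andP; split => //).
  move=> rhd; apply: ltW; apply: Hd.
  - lra.
  - by rewrite er.
  - rewrite T0 /=; apply: lt_le_trans Tr _; rewrite /tau ge_min lexx //.
have [g [gc gi g0 gs gb]] := @majorant R P HP1 HP2 HP3.
have gmono : forall x y : R, 0 <= x -> x <= y -> g x <= g y.
  move=> x y x0; rewrite le_eqVlt => /predU1P [->//|xy]; exact: ltW (gi x y x0 xy).
have gge0 : forall s : R, 0 <= s -> 0 <= g s by move=> s s0; exact: le_trans s0 (gs s s0).
pose K1' := Num.min K1 K2.
have K1'1 : 1 <= K1' by rewrite le_min K11 K21.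
have K1'0 : 0 < K1' by lra.
have K1'K1 : K1' <= K1 by rewrite ge_min lexx.
have K1'K2 : K1' <= K2 by rewrite ge_min lexx orbT.
pose c := (K2 / K1') `^ N^-1.
have KK1 : 1 <= K2 / K1' by rewrite ler_pdivlMr // mul1r.
have cN : c `^ N = K2 / K1'.
  by rewrite /c -powRrM mulVf ?gt_eqF // powRr1 //; lra.
have c1 : 1 <= c.
  rewrite /c; have := @ler_powR R (K2 / K1') KK1 0 N^-1.
  rewrite powRr0; apply; rewrite invr_ge0; exact: ltW.
have c0 : 0 < c by lra.
have powle : forall x y : R, 0 <= x -> x <= y -> x `^ N <= y `^ N.
  move=> x y x0 xy; apply: (ge0_ler_powR (ltW N0)) => //; rewrite nnegrE //.
  exact: le_trans xy.
have powinv : forall z Q : R, 0 <= z -> 0 <= Q -> K1' * z `^ N <= K2 * Q `^ N -> z <= c * Q.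
  move=> z Q z0 Q0 H; rewrite leNgt; apply/negP => hlt.
  have := gt0_ltr_powR N0 (x := c * Q) (y := z).
  rewrite !nnegrE => /(_ (mulr_ge0 (ltW c0) Q0) z0 hlt).
  rewrite powRM ?cN //; last exact: ltW.
  have ue : K2 / K1' * K1' = K2 by rewrite divfK // gt_eqF.
  move: (K2 / K1') ue (z `^ N) (Q `^ N) H => u ue a b H h2.
  nra.
pose lam := K3 / (K2 * N).
have lam0 : 0 < lam by rewrite divr_gt0 // ?mulr_gt0 //; lra.
exists c, lam, (fun s => c * g s); split; first exact: c1.
split; first exact: lam0.
split; first exact: scaled_Kinf c0 gc gi g0 gs.
move=> M E M0 E0.
have gE0 := gge0 E E0.
pose Mbar := c * (M + g E).
have Mbar0 : 0 <= Mbar by rewrite mulr_ge0 //; lra.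
have MgMbar : M + g E <= Mbar by rewrite /Mbar ler_peMl //; lra.
have [Tt [V [Tt0 [V0 [V1 [V2 V3]]]]]] := HV Mbar E Mbar0 E0.
pose Tst := Num.min Tt (Num.min (tau E) (K2 / K3)).
have K230 : 0 < K2 / K3 by rewrite divr_gt0 //; lra.
exists Tst; split.
  by have := tau_pos E E0; rewrite /Tst /tau !lt_min Tt0 K230 andbT.
move=> k Ts x0 e HTs Hx0 He.
pose Sg := fun k => \sum_(i < k) Ts i.
pose Se := fun k => \big[Num.max/0]_(i < k) vnorm (e i).
pose A := fun k => vnorm x0 * expR (- lam * Sg k).
pose Q := fun k => Num.max (A k) (g (Se k)).
have Ts0 : forall i, 0 < Ts i by move=> i; have /andP [] := HTs i.
have TsT : forall i, Ts i < Tst by move=> i; have /andP [] := HTs i.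
have Sg_step : forall k, Sg k.+1 = Sg k + Ts k by move=> j; rewrite /Sg /= big_ord_recr.
have Se0 : forall k, 0 <= Se k /\ Se k <= E.
  move=> j; split; first exact: bigmax_ge_id.
  by apply: bigmax_le => // i _; exact: He.
have Sg0 : forall k, 0 <= Sg k by move=> j; apply: sumr_ge0 => i _; exact: ltW.
have A0 : forall k, 0 <= A k by move=> j; rewrite mulr_ge0 // expR_ge0.
have Ale : forall k, A k <= vnorm x0.
  move=> j; rewrite /A -[X in _ <= X]mulr1 ler_wpM2l // expR_le1.
  by rewrite mulNr oppr_le0 mulr_ge0 // ltW.
have Q0 : forall k, 0 <= Q k by move=> j; rewrite le_max A0.
have QM : forall k, Q k <= M + g E.
  move=> j; rewrite ge_max; apply/andP; split.
  - have := Ale j; lra.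
  - have [h1 h2] := Se0 j; have := gmono _ _ h1 h2; lra.
have fromV : forall (z : 'cV[R]_n) Qv, 0 <= Qv -> (V z <= (K2 * Qv `^ N)%:E)%E -> vnorm z <= c * Qv.
  move=> z Qv Qv0 H; apply: (powinv _ _ (vn0 _ z) Qv0).
  have := le_trans (V1 z) H; rewrite lee_fin => h.
  apply: le_trans h; apply: ler_wpM2r => //; exact: powR_ge0.
have Inv : forall k, (V (traj F x0 e Ts k) <= (K2 * Q k `^ N)%:E)%E.
  elim=> [|j IH].
    rewrite /=; apply: le_trans (V2 x0 _) _.
      by apply: le_trans Hx0 _; lra.
    rewrite lee_fin; apply: ler_wpM2l; first lra.
    apply: powle; first exact: vn0.
    by rewrite /Q le_max /A /Sg big_ord0 mulr0 expR0 mulr1 lexx.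
  have bj := fromV _ _ (Q0 j) IH.
  rewrite [traj _ _ _ _ j.+1]/=.
  set xk := traj F x0 e Ts j in IH bj *.
  have rE : vnorm (e j) <= E := He j.
  have r0 := vn0 _ (e j).
  have rSe : vnorm (e j) <= Se j.+1 by exact: (le_bigmax 0 (fun i : 'I_j.+1 => vnorm (e i)) ord_max).
  have SeSe : Se j <= Se j.+1 by exact: (le_bigmax_ord xpredT (fun i => vnorm (e i)) (leqnSn j)).
  have GQ : g (Se j.+1) <= Q j.+1 by rewrite /Q le_max lexx orbT.
  have xkM : vnorm xk <= Mbar := le_trans bj (ler_wpM2l (ltW c0) (QM j)).
  case: (ltP (vnorm xk) (rho (vnorm (e j)))) => hin.
    have Pj : P (vnorm (e j)) (vnorm (F xk (e j) (Ts j))).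
      exists xk, (e j), (Ts j); split => //.
      rewrite Ts0 /=; apply: lt_le_trans (TsT j) _.
      apply: le_trans (tau_anti _ _ r0 rE).
      by rewrite /Tst ge_min; apply/orP; right; rewrite ge_min lexx.
    have y1 := gb _ _ _ Pj rSe.
    have [Se1 Se2] := Se0 j.+1.
    have yM : vnorm (F xk (e j) (Ts j)) <= Mbar.
      have := gmono _ _ Se1 Se2; lra.
    apply: le_trans (V2 _ yM) _; rewrite lee_fin; apply: ler_wpM2l; first lra.
    by apply: powle; [exact: vn0 | exact: le_trans y1 GQ].
  have TtT : Ts j < Tt by apply: lt_le_trans (TsT j) _; rewrite /Tst ge_min lexx.
  have TK : Ts j < K2 / K3.
    by apply: lt_le_trans (TsT j) _; rewrite /Tst ge_min; apply/orP; right; rewrite ge_min lexx orbT.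
  have Vs := V3 xk (e j) (Ts j) hin xkM rE ltac:(rewrite Ts0 TtT //).
  have V2' := V2 xk xkM.
  have V0' := V0 xk.
  move: IH Vs V2' V0'.
  case: (V xk) => [v| |]; last first.
  - by move=> _ _ _; rewrite leNgt ltNy0.
  - by move=> _ _; rewrite leNgt ltry.
  move=> IH' Vs' V2' V0'.
  rewrite lee_fin in IH' V2' V0'.
  rewrite -EFinB in Vs'.
  apply: le_trans Vs' _; rewrite lee_fin.
  set T := Ts j.
  set mu := K3 / K2.
  have K20 : 0 < K2 by lra.
  have muK : mu * K2 = K3 by rewrite /mu divfK // gt_eqF.
  have Tmu1 : T * mu < 1.
    have h1 : T * K3 < K2 by rewrite -ltr_pdivlMr //; lra.
    rewrite /mu mulrA ltr_pdivrMr // mul1r //.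
  have mu0 : 0 <= mu by rewrite /mu divr_ge0 //; lra.
  have Tmu0 : 0 <= T * mu by apply: mulr_ge0 mu0; exact: ltW (Ts0 j).
  have hA : A j.+1 <= Q j.+1 by rewrite /Q le_max lexx.
  have step3 : (1 - T * mu) * Q j `^ N <= Q j.+1 `^ N.
    have : Q j = A j \/ Q j = g (Se j) by rewrite /Q maxEle; case: ifP; auto.
    case=> ->.
      have eA : A j.+1 = A j * expR (- lam * T).
        by rewrite /A Sg_step mulrDr expRD mulrA.
      apply: le_trans (powle _ _ _ hA); last exact: A0.
      rewrite eA powRM ?expR_ge0 // -expRM.
      have -> : - lam * T * N = - (T * mu).
        by rewrite /lam /mu; field; apply/andP; split; rewrite gt_eqF.
      rewrite mulrC; apply: ler_wpM2l; first exact: powR_ge0.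
      have := expR_ge1Dx (- (T * mu)); lra.
    have [h1 h2] := Se0 j.
    have [h3 h4] := Se0 j.+1.
    apply: le_trans (powle _ _ _ GQ); last exact: gge0.
    apply: le_trans (powle _ _ (gge0 _ h1) (gmono _ _ h1 SeSe)).
    have := powR_ge0 (g (Se j)) N.
    move: (g (Se j) `^ N) => w w0. nra.
  have p0 := powR_ge0 (vnorm xk) N.
  have q0 := powR_ge0 (Q j) N.
  move: step3 IH' V2' p0 q0.
  move: (vnorm xk `^ N) (Q j `^ N) (Q j.+1 `^ N) => p qa qb step3 IH' V2' p0 q0.
  have e1 : v - T * (K3 * p) <= (1 - T * mu) * v.
    have : mu * v <= K3 * p by rewrite -muK -mulrA; apply: ler_wpM2l => //; rewrite /mu divr_ge0 //; lra.
    have T0 : 0 <= T := ltW (Ts0 j).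
    nra.
  have e2 : (1 - T * mu) * v <= (1 - T * mu) * (K2 * qa) by apply: ler_wpM2l => //; lra.
  nra.
have b := fromV _ _ (Q0 k) (Inv k).
apply: le_trans b _.
have QAG : Q k <= A k + g (Se k).
  rewrite ge_max; apply/andP; split.
  - have := gge0 _ (Se0 k).1; lra.
  - have := A0 k; lra.
apply: le_trans (ler_wpM2l (ltW c0) QAG) _.
by rewrite /A /Sg /Se mulrDr mulrA.
Qed.
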